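(* Let $X\neq\{0\}$ be a Hausdorff topological vector space over $\mathbb{K}=\mathbb{R}$ or $\mathbb{C}$ and let $A$ be a nonvoid subset of $X$. If $(x_n)_{n=1}^\infty$ is an $\ell_\infty$-independent sequence of elements of $X$ and $A$ is $[(x_n)_{n=1}^\infty,\mathcal{S}]$-lineable for some infinite dimensional subspace $\mathcal{S}$ of $\ell_\infty$, then $A$ is lineable.
   Context: $\ell_\infty$ is the space of bounded scalar sequences, a subspace of $\mathbb{K}^{\mathbb{N}}$. A sequence $(x_n)_{n=1}^\infty$ in a topological vector space $X$ is $\ell_\infty$-independent if whenever $(c_n)_{n=1}^\infty\in\ell_\infty$ and $\sum_{n=1}^\infty c_nx_n=0$ (convergent series in $X$), then $c_n=0$ for all $n$. For a subspace $\mathcal{S}$ of $\mathbb{K}^{\mathbb{N}}$, a subset $A\subset X$ is $[(x_n)_{n=1}^\infty,\mathcal{S}]$-lineable if for each $(c_n)_{n=1}^\infty\in\mathcal{S}$ the series $\sum_{n=1}^\infty c_nx_n$ converges in $X$ to a vector of $A\cup\{0\}$. A subset $A$ is lineable if $A\cup\{0\}$ contains an infinite dimensional vector subspace. *)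

(* Defs.v *)
From mathcomp Require Import all_boot all_algebra.
From mathcomp Require Import all_classical all_reals all_analysis.
From mathcomp Require Import complex.
Import numFieldNormedType.Exports.

Set Implicit Arguments.
Unset Strict Implicit.
Unset Printing Implicit Defensive.

Local Open Scope classical_set_scope.
Local Open Scope ring_scope.

(* The series sum_n c_n x_n converges in X to y
   (indices start at 0 instead of 1). *)
Definition series_to (K : numFieldType) (X : topologicalLmodType K)
  (c : nat -> K) (x : nat -> X) (y : X) : Prop :=
  series (fun n => c n *: x n) @ \oo --> y.

Definition linfty (K : numFieldType) : set (nat -> K) :=
  [set c | exists M : K, forall n, `|c n| <= M].

Definition linfty_independent (K : numFieldType) (X : topologicalLmodType K)
  (x : nat -> X) : Prop :=
  forall c : nat -> K, @linfty K c -> series_to c x 0 -> forall n, c n = 0.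

Definition is_subspace (K : numDomainType) (V : lmodType K) (M : set V) : Prop :=
  M 0 /\ (forall u v, M u -> M v -> M (u + v)) /\
  (forall (a : K) v, M v -> M (a *: v)).

Definition span_seq (K : numDomainType) (V : lmodType K) (s : seq V) : set V :=
  [set v | exists a : 'I_(size s) -> K, v = \sum_(i < size s) a i *: s`_i].

Definition infinite_dim (K : numDomainType) (V : lmodType K) (M : set V) : Prop :=
  forall s : seq V, (forall v, v \in s -> M v) -> ~ (M `<=` span_seq s).

Definition lineable (K : numFieldType) (X : topologicalLmodType K) (A : set X) : Prop :=
  exists M : set X, [/\ is_subspace M, infinite_dim M & M `<=` A `|` [set 0]].

Definition seq_lineable (K : numFieldType) (X : topologicalLmodType K)
  (A : set X) (x : nat -> X) (S : set (nat -> K)) : Prop :=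
  forall c, S c -> exists2 y, series_to c x y & (A `|` [set 0]) y.

Definition main_statement (K : numFieldType) : Prop :=
  forall (X : topologicalLmodType K), hausdorff_space X ->
  (exists v : X, v != 0) ->
  forall (A : set X), A !=set0 ->
  forall (x : nat -> X), linfty_independent x ->
  forall (S : set (nat -> K)),
    is_subspace S -> S `<=` @linfty K -> infinite_dim S ->
    seq_lineable A x S -> lineable A.

(* Main.v *)
Require Import Defs.
From mathcomp Require Import all_boot all_algebra.
From mathcomp Require Import all_classical all_reals all_analysis.
From mathcomp Require Import complex.
Import numFieldNormedType.Exports.
Import GRing.Theory Num.Theory.
Local Open Scope classical_set_scope.
Local Open Scope ring_scope.

Lemma series_toD (K : numFieldType) (X : topologicalLmodType K) c d (x : nat -> X) y1 y2 :
  series_to c x y1 -> series_to d x y2 -> series_to (c + d) x (y1 + y2).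
Proof.
rewrite /series_to => h1 h2.
have -> : series (fun n => (c + d) n *: x n) = (fun n => series (fun n => c n *: x n) n + series (fun n => d n *: x n) n).
  apply/funext => n; rewrite /series /= -big_split /=; apply: eq_bigr => i _; by rewrite scalerDl.
apply: (@continuous2_cvg _ _ _ _ _ _ _ _ (fun a b => a + b) _ _ _ h1 h2).
exact: (@add_continuous X (y1, y2)).
Qed.

Lemma series_toZ (K : numFieldType) (X : topologicalLmodType K) (a : K) c (x : nat -> X) y :
  series_to c x y -> series_to (a *: c) x (a *: y).
Proof.
rewrite /series_to => h1.
have -> : series (fun n => (a *: c) n *: x n) = (fun n => a *: series (fun n => c n *: x n) n).
  apply/funext => n; rewrite /series /= scaler_sumr; apply: eq_bigr => i _; by rewrite scalerA.
apply: (@continuous2_cvg _ (K^o) X X _ _ _ _ (fun (b : K^o) (v : X) => b *: v) _ _ _ (cvg_cst a) h1).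
exact: (@scale_continuous K X (a, y)).
Qed.

Lemma series_to0 (K : numFieldType) (X : topologicalLmodType K) (x : nat -> X) :
  series_to 0 x 0.
Proof.
rewrite /series_to.
have -> : series (fun n => (0 : nat -> K) n *: x n) = (fun n => 0).
  apply/funext => n; rewrite /series /= big1 // => i _; by rewrite scale0r.
exact: cvg_cst.
Qed.

Lemma main_gen (K : numFieldType) : main_statement K.
Proof.
move=> X hX _ A _ x xind S [S0 [SD SZ]] Slinf Sinf Hlin.
have uniq : forall c y1 y2, series_to c x y1 -> series_to c x y2 -> y1 = y2.
  move=> c y1 y2; rewrite /series_to => h1 h2; apply: (@cvg_unique X hX (series (fun n => c n *: x n) @ \oo) _ y1 y2 h1 h2).
pose M := [set y | exists2 c, S c & series_to c x y].
exists M; split.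
- split; first by exists 0 => //; exact: series_to0.
  split.
    by move=> u v [c Sc hc] [d Sd hd]; exists (c + d); [exact: SD | exact: series_toD].
  by move=> a v [c Sc hc]; exists (a *: c); [exact: SZ | exact: series_toZ].
- move=> s sM sspan.
  have [t [tsz tP]] : exists t : seq (nat -> K), size t = size s /\
      forall i, (i < size s)%N -> S t`_i /\ series_to t`_i x s`_i.
    elim: s sM {sspan} => [|v s IH] sM; first by exists [::].
    have [c Sc hc] := sM v (mem_head _ _).
    have [t [tsz tP]] : exists t : seq (nat -> K), size t = size s /\
      forall i, (i < size s)%N -> S t`_i /\ series_to t`_i x s`_i.
      by apply: IH => w ws; apply: sM; rewrite in_cons ws orbT.
    exists (c :: t); split; first by rewrite /= tsz.
    by case=> [|i] /= hi; [done | apply: tP].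
  apply: (Sinf t).
  - move=> v /(nthP 0) [i hi <-]; rewrite tsz in hi; exact: (tP i hi).1.
  - move=> c Sc; have [y hy _] := Hlin c Sc.
    have /sspan [a ya] : M y by exists c.
    rewrite /span_seq /= tsz; exists a.
    set d := \sum_(i < size s) a i *: t`_i.
    have [Sd hd] : S d /\ series_to d x y.
      rewrite ya /d; apply: (big_ind2 (fun c y => S c /\ series_to c x y)).
      + by split; [exact: S0 | exact: series_to0].
      + by move=> c1 y1 c2 y2 [? ?] [? ?]; split; [exact: SD | exact: series_toD].
      + move=> i _; have [St ht] := tP i (ltn_ord i).
        by split; [exact: SZ | exact: series_toZ].
    have hcd : series_to (c - d) x 0.
      have := @series_toD _ _ _ _ _ _ _ hy (@series_toZ _ _ (-1) _ _ _ hd).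
      by rewrite !scaleN1r subrr.
    have Scd : S (c - d) by rewrite -scaleN1r; apply: SD => //; apply: SZ.
    have h0 := xind _ (Slinf _ Scd) hcd.
    by apply/subr0_eq/funext => n; exact: h0 n.
- move=> y [c Sc hc]; have [y' hy' Ay'] := Hlin c Sc.
  by rewrite (uniq _ _ _ hc hy').
Qed.

Theorem mainTheorem2 (R : realType) :
  main_statement R /\ main_statement R[i].
Proof. by split; apply: main_gen. Qed.
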